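(* In the Bayesian offline learning setting for $n$-round dynamic inference described in the context, let $\psi_m^n$ be any offline-learned estimation strategy. Then $$\mathbb P\big[(\pi_m,X_{i+1})\in A\times B\mid\pi_m,X^i,\hat Y^i\big]=\mathbf 1\{\pi_m\in A\}\,\mathbb P\big[X_{i+1}\in B\mid X_i,\hat Y_i\big]$$ for any Borel sets $A\subset\Delta$ and $B\subset\mathsf X$, any realization of $(\pi_m,X^i,\hat Y^i)$, and any $i=1,\ldots,n-1$. In other words, $(\pi_m,X_i)_{i=1}^n$ is a controlled Markov chain with control sequence $\hat Y^n$.
   Context: Setting (Bayesian offline learning for $n$-round dynamic inference). $\mathsf X,\mathsf Y,\hat{\mathsf Y},\mathsf W$ are measurable spaces and $\Delta$ is the space of probability distributions on $\mathsf W$. The following are given: a distribution $P_{X_1}$ on $\mathsf X$; probability transition kernels $K_i(\cdot\mid x,\hat y)$ from $\mathsf X\times\hat{\mathsf Y}$ to $\mathsf X$ for $i=2,\ldots,n$; a parametrized family of kernels $\{P_{Y|X,w}:w\in\mathsf W\}$ from $\mathsf X$ to $\mathsf Y$; a prior $P_W$ on $\mathsf W$; a conditional distribution $P_{Z^m|W}$ of an $m$-sample training dataset $Z^m$ with values in $(\mathsf X\times\hat{\mathsf Y})^m$; and a loss $\ell$. An offline-learned estimation strategy is a tuple $\psi_m^n=(\psi_{m,1},\ldots,\psi_{m,n})$ of maps $\psi_{m,i}:(\mathsf X\times\hat{\mathsf Y})^m\times\mathsf X^i\times\hat{\mathsf Y}^{i-1}\to\hat{\mathsf Y}$. It determines the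 joint law of $(W,Z^m,X^n,Y^n,\hat Y^n)$ as follows. $W\sim P_W$, and $Z^m\mid W\sim P_{Z^m|W}$. $X_1\sim P_{X_1}$ is independent of $(W,Z^m)$. For each $i$: given all previously generated variables, $Y_i\sim P_{Y|X,W}(\cdot\mid X_i,W)$; $\hat Y_i=\psi_{m,i}(Z^m,X^i,\hat Y^{i-1})$; and, given all variables generated up to round $i$, $X_{i+1}\sim K_{i+1}(\cdot\mid X_i,\hat Y_i)$. Let $\pi_m(\cdot)=\mathbb P[W\in\cdot\mid Z^m]$. *)

(* Defs.v *)
From HB Require Import structures.
From mathcomp Require Import all_boot all_order all_algebra.
From mathcomp Require Import all_classical all_reals all_analysis measurable_realfun giry.
Set Implicit Arguments. Unset Strict Implicit. Unset Printing Implicit Defensive.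
Import Order.TTheory GRing.Theory Num.Theory.
Local Open Scope classical_set_scope.
Local Open Scope ring_scope.

Definition rv_sigma {dO} {O : measurableType dO} {d'} {T' : measurableType d'}
  (f : O -> T') : set (set O) := preimage_set_system setT f measurable.

Definition rounds (lo hi : nat) : set nat := [set j | (lo <= j <= hi)%N].

Definition sub_measurable {dO} {O : measurableType dO} {R : realType}
  (G : set (set O)) (h : O -> \bar R) : Prop :=
  forall U : set (\bar R), measurable U -> G (h @^-1` U).

Definition cond_prob_version {dO} {O : measurableType dO} {R : realType}
  (P : probability O R) (G : set (set O)) (E : set O) (h : O -> \bar R) : Prop :=
  [/\ sub_measurable G h, P.-integrable setT h &
      forall S, G S -> P (E `&` S) = (\int[P]_(x in S) h x)%E].

(* Main.v *)
Require Import Defs.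
From HB Require Import structures.
From mathcomp Require Import all_boot all_order all_algebra.
From mathcomp Require Import all_classical all_reals all_analysis measurable_realfun giry.
Import Order.TTheory GRing.Theory Num.Theory.
Local Open Scope classical_set_scope.
Local Open Scope ring_scope.


Section helpers.
Set Implicit Arguments.
Unset Strict Implicit.
Context d (O : measurableType d) (R : realType).

Lemma rv_sigma_meas d' (T' : measurableType d') (f : O -> T') :
  measurable_fun setT f -> rv_sigma f `<=` measurable.
Proof. by move=> mf _ [B mB <-]; exact: mf. Qed.

Lemma sigma_meas (G : set (set O)) : G `<=` measurable -> <<s G >> `<=` measurable.
Proof. by move=> GP; apply: smallest_sub => //; exact: sigma_algebra_measurable. Qed.

Lemma meas_sub (G : set (set O)) d' (T' : measurableType d') (f : O -> T') :
  rv_sigma f `<=` <<s G >> ->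
  measurable_fun setT (f : g_sigma_algebraType G -> T').
Proof. by move=> H _ U mU; apply: H; exists U. Qed.

Lemma sub_meas_fun (G : set (set O)) (f : O -> \bar R) :
  sub_measurable <<s G >> f <-> measurable_fun setT (f : g_sigma_algebraType G -> \bar R).
Proof.
split => [H _ U mU|H U mU]; first by rewrite setTI; exact: H.
by have := H measurableT U mU; rewrite setTI.
Qed.

Variable P : probability O R.
Variable G : set (set O).
Hypothesis GP : <<s G >> `<=` measurable.
Let T0 := g_sigma_algebraType G.
Let mid : measurable_fun setT (id : O -> T0).
Proof. by move=> _ B mB; rewrite setTI; exact: GP. Qed.

Let mu0 : measure T0 R.
Proof. refine (pushforward P (id : O -> T0)); exact: mid. Defined.

Local Open Scope ereal_scope.
Lemma ae_unique (h k : O -> \bar R) :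
  sub_measurable <<s G >> h -> sub_measurable <<s G >> k ->
  P.-integrable setT h -> (forall x, 0 <= k x) ->
  (forall E, <<s G >> E -> \int[P]_(x in E) h x = \int[P]_(x in E) k x) ->
  ae_eq P setT h k.
Proof.
move=> /sub_meas_fun mh /sub_meas_fun mk ih k0 hk.
have ih0 : mu0.-integrable setT (h : T0 -> _).
  exact: (integrable_pushforward mid mh ih measurableT).
have H : ae_eq mu0 setT (h : T0 -> _) k.
  apply: (integral_ae_eq measurableT ih0 mk) => E _ mE.
  rewrite (integral_pushforward mid mh) //; last first.
    apply: integrableS ih => //; exact: GP.
  rewrite (ge0_integral_pushforward mid).
  exact: hk.
  all: try done.
  all: try (by move=> x _; exact: k0).
  all: try (exact: measurable_funTS).

case: H.
move=> N [mN N0 sub]; exists N; split => //; exact: GP.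
Qed.

End helpers.

Theorem lemma2
  (R : realType) (n m : nat)
  (dX dY dYh dW : measure_display)
  (TX : measurableType dX) (TY : measurableType dY)
  (TYh : measurableType dYh) (TW : measurableType dW)
  (* model ingredients *)
  (PX1 : probability TX R)
  (K : nat -> R.-pker (TX * TYh) ~> TX)
  (PY : R.-pker (TX * TW) ~> TY)
  (PW : probability TW R)
  (PZ : R.-pker TW ~> m.-tuple (TX * TYh))
  (* offline-learned estimation strategy psi_{m,i}, i = 1..n *)
  (psi : forall i : nat, m.-tuple (TX * TYh) -> i.-tuple TX -> i.-1.-tuple TYh -> TYh)
  (psi_meas : forall i : nat, (1 <= i <= n)%N ->
     measurable_fun setT
       (fun t : m.-tuple (TX * TYh) * i.-tuple TX * i.-1.-tuple TYh =>
          psi i t.1.1 t.1.2 t.2))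
  (* the underlying probability space and the random variables (rounds indexed 1..n) *)
  (dO : measure_display) (Omega : measurableType dO) (P : probability Omega R)
  (W : Omega -> TW) (Z : Omega -> m.-tuple (TX * TYh))
  (X : nat -> Omega -> TX) (Y : nat -> Omega -> TY) (Yh : nat -> Omega -> TYh)
  (mW : measurable_fun setT W) (mZ : measurable_fun setT Z)
  (mX : forall i, (1 <= i <= n)%N -> measurable_fun setT (X i))
  (mY : forall i, (1 <= i <= n)%N -> measurable_fun setT (Y i))
  (mYh : forall i, (1 <= i <= n)%N -> measurable_fun setT (Yh i))
  (* W ~ P_W *)
  (HW : forall E, measurable E -> P (W @^-1` E) = PW E)
  (* Z^m | W ~ P_{Z^m|W} *)
  (HZ : forall E C, measurable E -> measurable C ->
     P (W @^-1` E `&` Z @^-1` C) = (\int[P]_(w in W @^-1` E) PZ (W w) C)%E)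
  (* X_1 ~ P_{X_1}, independent of (W, Z^m) *)
  (HX1 : forall D S, measurable D -> <<s rv_sigma W `|` rv_sigma Z >> S ->
     P (X 1%N @^-1` D `&` S) = (PX1 D * P S)%E)
  (* Y_i | (W, Z^m, X^i, Y^{i-1}, Yh^{i-1}) ~ P_{Y|X,W}(. | X_i, W) *)
  (HY : forall i, (1 <= i <= n)%N -> forall D S, measurable D ->
     <<s rv_sigma W `|` rv_sigma Z
         `|` \bigcup_(j in rounds 1 i) rv_sigma (X j)
         `|` \bigcup_(j in rounds 1 i.-1) rv_sigma (Y j)
         `|` \bigcup_(j in rounds 1 i.-1) rv_sigma (Yh j) >> S ->
     P (Y i @^-1` D `&` S) = (\int[P]_(w in S) PY (X i w, W w) D)%E)
  (* Yh_i = psi_{m,i}(Z^m, X^i, Yh^{i-1}) *)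
  (HYh : forall i, (1 <= i <= n)%N -> forall w,
     Yh i w = psi i (Z w) [tuple X j.+1 w | j < i] [tuple Yh j.+1 w | j < i.-1])
  (* X_{i+1} | (W, Z^m, X^i, Y^i, Yh^i) ~ K_{i+1}(. | X_i, Yh_i) *)
  (HX : forall i, (1 <= i <= n.-1)%N -> forall D S, measurable D ->
     <<s rv_sigma W `|` rv_sigma Z
         `|` \bigcup_(j in rounds 1 i) rv_sigma (X j)
         `|` \bigcup_(j in rounds 1 i) rv_sigma (Y j)
         `|` \bigcup_(j in rounds 1 i) rv_sigma (Yh j) >> S ->
     P (X i.+1 @^-1` D `&` S) = (\int[P]_(w in S) K i.+1 (X i w, Yh i w) D)%E)
  (* pi_m = P[W in . | Z^m]: a measurable posterior map z |-> post z *)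
  (post : m.-tuple (TX * TYh) -> giry TW R)
  (mpost : measurable_fun setT post)
  (post1 : forall z, post z setT = 1%E)
  (Hpost : forall E C, measurable E -> measurable C ->
     P (W @^-1` E `&` Z @^-1` C) = (\int[P]_(w in Z @^-1` C) post (Z w) E)%E) :
  let pi := fun w => post (Z w) in
  forall i, (1 <= i <= n.-1)%N ->
  forall (A : set (giry TW R)) (B : set TX), measurable A -> measurable B ->
  forall h : Omega -> \bar R,
    (* h is a version of P[X_{i+1} in B | X_i, Yh_i] *)
    cond_prob_version P <<s rv_sigma (X i) `|` rv_sigma (Yh i) >>
      (X i.+1 @^-1` B) h ->
    (* then 1{pi_m in A} h is a version of P[(pi_m, X_{i+1}) in A x B | pi_m, X^i, Yh^i] *)
    cond_prob_version P
      <<s rv_sigma pi `|` \bigcup_(j in rounds 1 i) rv_sigma (X j)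
          `|` \bigcup_(j in rounds 1 i) rv_sigma (Yh j) >>
      (pi @^-1` A `&` X i.+1 @^-1` B)
      (fun w => ((\1_A (pi w))%:E * h w)%E).
Proof.
move=> pi i /andP[i1 iN] A B mA mB h [hm hi hS].
have iN' : (i <= n)%N by apply: leq_trans iN (leq_pred n).
have iNn : (1 <= i <= n.-1)%N by rewrite i1 iN.
set Gb0 := rv_sigma (X i) `|` rv_sigma (Yh i).
set GbT := rv_sigma pi `|` _ `|` _.
pose GbF := rv_sigma W `|` rv_sigma Z
         `|` \bigcup_(j in rounds 1 i) rv_sigma (X j)
         `|` \bigcup_(j in rounds 1 i) rv_sigma (Y j)
         `|` \bigcup_(j in rounds 1 i) rv_sigma (Yh j).
have mXj j : (1 <= j <= i)%N -> measurable_fun setT (X j).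
  by move=> /andP[j1 ji]; apply: mX; rewrite j1 (leq_trans ji iN').
have mYj j : (1 <= j <= i)%N -> measurable_fun setT (Y j).
  by move=> /andP[j1 ji]; apply: mY; rewrite j1 (leq_trans ji iN').
have mYhj j : (1 <= j <= i)%N -> measurable_fun setT (Yh j).
  by move=> /andP[j1 ji]; apply: mYh; rewrite j1 (leq_trans ji iN').
have mpi : measurable_fun setT pi by exact: measurableT_comp mpost mZ.
have FP : <<s GbF >> `<=` measurable.
  apply: sigma_meas => S [[[[|]|]|]|].
  - by move=> HS; exact: (rv_sigma_meas mW) HS.
  - by move=> HS; exact: (rv_sigma_meas mZ) HS.
  - by move=> [j ji HS]; exact: (rv_sigma_meas (mXj j ji)) HS.
  - by move=> [j ji HS]; exact: (rv_sigma_meas (mYj j ji)) HS.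
  - by move=> [j ji HS]; exact: (rv_sigma_meas (mYhj j ji)) HS.
have GF : <<s GbT >> `<=` <<s GbF >>.
  apply: smallest_sub; first exact: smallest_sigma_algebra.
  move=> S [[|]|].
  - move=> [U mU <-]; apply: sub_gen_smallest; left; left; left; right.
    exists (setT `&` post @^-1` U); first by exact: mpost.
    by rewrite !setTI.
  - by move=> HS; apply: sub_gen_smallest; left; left; right.
  - by move=> HS; apply: sub_gen_smallest; right.
have G0T : <<s Gb0 >> `<=` <<s GbT >>.
  apply: smallest_sub; first exact: smallest_sigma_algebra.
  move=> S [|] HS; apply: sub_gen_smallest.
  - by left; right; exists i => //; rewrite /rounds /= i1 leqnn.
  - by right; exists i => //; rewrite /rounds /= i1 leqnn.
have TP : <<s GbT >> `<=` measurable := subset_trans GF FP.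
have G0P : <<s Gb0 >> `<=` measurable := subset_trans G0T TP.
pose k := fun w => K i.+1 (X i w, Yh i w) B.
have mk : sub_measurable <<s Gb0 >> k.
  apply/sub_meas_fun.
  apply: (measurableT_comp (f := fun x => K i.+1 x B)
    (g := fun w : g_sigma_algebraType Gb0 => (X i w, Yh i w))).
    exact: measurable_kernel.
  apply: measurable_fun_pair; apply: meas_sub => S HS; apply: sub_gen_smallest.
  - by left.
  - by right.
have k0 : forall x, (0 <= k x)%E by move=> x; exact: measure_ge0.
have hk : forall E, <<s Gb0 >> E -> (\int[P]_(x in E) h x = \int[P]_(x in E) k x)%E.
  by move=> E HE; rewrite -hS // HX //; apply: GF; apply: G0T.
have ae := ae_unique G0P hm mk hi k0 hk.
have mpiT : measurable_fun setT (pi : g_sigma_algebraType GbT -> _).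
  by apply: meas_sub => S HS; apply: sub_gen_smallest; left; left.
have mhT : measurable_fun setT (h : g_sigma_algebraType GbT -> \bar R).
  by move=> _ U mU; rewrite setTI; apply: G0T; exact: hm.
have mgT : measurable_fun setT
    ((fun w => ((\1_A (pi w))%:E * h w)%E) : g_sigma_algebraType GbT -> \bar R).
  have mi : measurable_fun setT
      ((fun w => (\1_A (pi w))%:E) : g_sigma_algebraType GbT -> \bar R).
    have mi' : measurable_fun setT
        ((fun w => (\1_A (pi w) : R)) : g_sigma_algebraType GbT -> R).
      have HI := @measurable_indic _ _ R setT A mA.
      exact: (measurableT_comp HI mpiT).
    exact/measurable_EFinP.
  exact: (emeasurable_funM mi mhT).
have mg : measurable_fun setT (fun w => ((\1_A (pi w))%:E * h w)%E).
  by move=> _ U mU; apply: TP; exact: mgT.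
split.
- by apply/sub_meas_fun.
- apply: le_integrable hi => // x _.
  rewrite abseM indicE; case: (_ \in _) => /=.
  + by rewrite normr1 mul1e.
  + by rewrite normr0 mul0e abse_ge0.
move=> S GS.
have mAS : <<s GbT >> (S `&` pi @^-1` A).
  have := @measurableI _ (g_sigma_algebraType GbT) S (pi @^-1` A) GS.
  apply; rewrite -[X in measurable X]setTI; exact: mpiT.
rewrite (_ : _ `&` _ `&` S = X i.+1 @^-1` B `&` (S `&` pi @^-1` A)); last first.
  by apply/seteqP; split => x /=; tauto.
rewrite HX //; last exact: GF.
have mSA : measurable (S `&` pi @^-1` A) by exact: TP.
have mkO : measurable_fun setT k.
  by move=> _ U mU; apply: G0P; rewrite setTI; exact: mk.
have mhO : measurable_fun setT h.
  by move=> _ U mU; apply: G0P; rewrite setTI; exact: hm.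
transitivity (\int[P]_(x in S `&` pi @^-1` A) h x)%E.
  apply: (ae_eq_integral h) => //.
  - exact: measurable_funTS.
  - exact: measurable_funTS.
  - by apply: filterS ae => x H _; rewrite H.
rewrite integral_mkcondr; apply: eq_integral => x _.
rewrite patchE indicE; case: ifPn => xA.
- by rewrite (mem_set (set_mem xA : A (pi x))) mul1e.
- rewrite memNset ?mul0e //.
  by move=> H; move/negP: xA; apply; exact: mem_set.
Qed.
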